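(* Let $\mathbb{K}$ be a totally ordered field and $\kappa$ an uncountable cardinal. Then $\mathbb{K}$ is algebraically $\kappa$-saturated if and only if $\mathbb{K}$ is both Cantor $\kappa$-complete and algebraically $\kappa$-saturated at infinity.
   Context: $\mathbb{K}$ is algebraically $\kappa$-saturated if every family of fewer than $\kappa$ open intervals $(a_\gamma,b_\gamma)$ in $\mathbb{K}$ with the finite intersection property has non-empty intersection. $\mathbb{K}$ is algebraically $\kappa$-saturated at infinity if every subset of $\mathbb{K}$ of cardinality less than $\kappa$ is bounded. $\mathbb{K}$ is Cantor $\kappa$-complete if every family of fewer than $\kappa$ closed bounded intervals $[a_\gamma,b_\gamma]$ in $\mathbb{K}$ with the finite intersection property has non-empty intersection. *)

(* Defs.v *)
From HB Require Import structures.
From mathcomp Require Import all_boot all_order all_algebra.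
From Stdlib Require Import List.
Set Implicit Arguments. Unset Strict Implicit. Unset Printing Implicit Defensive.
Import Order.TTheory GRing.Theory Num.Theory.
Local Open Scope ring_scope.

(* Cardinal comparison of types: |A| <= |B| and |A| < |B|. A cardinal kappa is
   represented as the cardinality of a type Kappa. *)
Definition card_le (A B : Type) : Prop := exists f : A -> B, injective f.
Definition card_lt (A B : Type) : Prop := card_le A B /\ ~ card_le B A.

Definition uncountable (Kappa : Type) : Prop := ~ card_le Kappa nat.

Definition alg_saturated (K : realFieldType) (Kappa : Type) : Prop :=
  forall (I : Type) (a b : I -> K), card_lt I Kappa ->
    (forall s : list I, exists x : K, forall i, List.In i s -> a i < x < b i) ->
    exists x : K, forall i, a i < x < b i.

Definition alg_saturated_at_infinity (K : realFieldType) (Kappa : Type) : Prop :=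
  forall S : K -> Prop, card_lt {x : K | S x} Kappa ->
    exists l u : K, forall x, S x -> l <= x <= u.

Definition cantor_complete (K : realFieldType) (Kappa : Type) : Prop :=
  forall (I : Type) (a b : I -> K), card_lt I Kappa ->
    (forall s : list I, exists x : K, forall i, List.In i s -> a i <= x <= b i) ->
    exists x : K, forall i, a i <= x <= b i.

(* Main.v *)
Require Import Defs.
From HB Require Import structures.
From mathcomp Require Import all_boot all_order all_algebra.
From Stdlib Require Import List ClassicalEpsilon Classical ProofIrrelevance.
Import Order.TTheory GRing.Theory Num.Theory.
Local Open Scope ring_scope.

Section Helpers.
Variable K : realFieldType.

Lemma inv_lt (p q : K) : 0 < p -> 0 < q -> p < q -> q^-1 < p^-1.
Proof. by move=> hp hq hpq; rewrite ltf_pV2 ?posrE. Qed.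

Lemma fin_lower (I : Type) (f : I -> K) : (forall i, 0 < f i) ->
  forall s : list I, exists x : K, 0 < x /\ forall i, List.In i s -> x < f i.
Proof.
move=> hf; elim=> [|j s [x [hx H]]]; first by exists 1; split.
have hm : 0 < Num.min x (f j) by rewrite lt_min hx hf.
have hm2 : Num.min x (f j) / 2 < Num.min x (f j).
  by rewrite ltr_pdivrMr // ltr_pMr // ltr1n.
exists (Num.min x (f j) / 2); split; first by rewrite divr_gt0.
move=> i [<-|hi].
  by apply: (lt_le_trans hm2); rewrite ge_min lexx orbT.
apply: (lt_le_trans hm2); apply: le_trans (ltW (H i hi)).
by rewrite ge_min lexx.
Qed.

Lemma ex_max (I : Type) (f : I -> K) (s : list I) (d : K) :
  exists c, d <= c /\ (forall i, List.In i s -> f i <= c) /\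
    (c = d \/ exists i, List.In i s /\ f i = c).
Proof.
elim: s => [|j s [c [hd [H E]]]]; first by exists d; split => //; split => //; left.
case: (leP (f j) c) => hc.
  exists c; split => //; split; first by move=> i [<-|hi] //; apply: H.
  by case: E => [->|[i [hi hc']]]; [left|right; exists i; split => //; right].
exists (f j); split; first by apply/ltW/(le_lt_trans hd).
split; last by right; exists j; split => //; left.
by move=> i [<-|hi] //; apply/ltW/(le_lt_trans (H i hi)).
Qed.

Lemma ex_min (I : Type) (f : I -> K) (s : list I) (d : K) :
  exists c, c <= d /\ (forall i, List.In i s -> c <= f i) /\
    (c = d \/ exists i, List.In i s /\ f i = c).
Proof.
have [c [hd [H E]]] := @ex_max I (fun i => - f i) s (- d).
exists (- c); split; first by rewrite lerNl.
split; first by move=> i hi; rewrite lerNl; apply: H.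
case: E => [->|[i [hi hi']]]; first by left; rewrite opprK.
by right; exists i; split => //; rewrite -hi' opprK.
Qed.

End Helpers.

Lemma card_le_trans (A B C : Type) : card_le A B -> card_le B C -> card_le A C.
Proof.
move=> [f hf] [g hg]; exists (fun x => g (f x)) => x y /hg /hf //.
Qed.

Lemma card_image (I T : Type) (f : I -> T) (Kappa : Type) :
  card_lt I Kappa -> card_lt {t : T | exists i, t = f i} Kappa.
Proof.
have hle : card_le {t : T | exists i, t = f i} I.
  exists (fun p : {t : T | exists i, t = f i} =>
    proj1_sig (constructive_indefinite_description (fun i => proj1_sig p = f i) (proj2_sig p))).
  move=> [x px] [y py] /=.
  case: (constructive_indefinite_description _ px) => i hi.
  case: (constructive_indefinite_description _ py) => j hj /= eij.
  subst; have -> : px = py by apply: proof_irrelevance.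
  done.
move=> [h1 h2]; split; first exact: card_le_trans hle h1.
by move=> h; apply: h2; apply: card_le_trans h hle.
Qed.

Theorem mainTheorem16 (K : realFieldType) (Kappa : Type) (hk : uncountable Kappa) :
  alg_saturated K Kappa <->
  (cantor_complete K Kappa /\ alg_saturated_at_infinity K Kappa).
Proof.
split.
- move=> hs; split.
  +
    move=> I a b hI hfip.
    case: (classic (forall s : list I, exists x : K, forall i, List.In i s -> a i < x < b i)).
      move=> hop; have [x hx] := hs I a b hI hop.
      by exists x => i; have /andP[h1 h2] := hx i; rewrite !ltW.
    move=> /not_all_ex_not [s hs'].
    case: s hs' => [|k s] hs'.
      by exfalso; apply: hs'; exists 0.
    have [c [hc1 [Hc Ec]]] := @ex_max K I a s (a k).
    have [e [he1 [He Ee]]] := @ex_min K I b s (b k).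
    have [x0 hx0] := hfip (k :: s).
    have ci : exists i, a i = c.
      by case: Ec => [->|[i [_ <-]]]; [exists k|exists i].
    have ej : exists j, b j = e.
      by case: Ee => [->|[j [_ <-]]]; [exists k|exists j].
    have hce : c <= e.
      have /andP[hk1 hk2] := hx0 k (or_introl erefl).
      case: ci => i hi; case: (Ec) => [Ecd|[i' [hi' hai']]].
      * case: (Ee) => [Eed|[j' [hj' hbj']]].
        -- by rewrite Ecd Eed (le_trans hk1 hk2).
        -- have /andP[_ h] := hx0 j' (or_intror hj').
           by rewrite -hbj' Ecd (le_trans hk1 h).
      * have /andP[h _] := hx0 i' (or_intror hi').
        case: (Ee) => [Eed|[j' [hj' hbj']]].
        -- by rewrite -hai' Eed (le_trans h hk2).
        -- have /andP[_ h'] := hx0 j' (or_intror hj').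
           by rewrite -hai' -hbj' (le_trans h h').
    case: (ltP c e) => hlt.
      exfalso; apply: hs'; exists ((c + e) / 2) => i hi.
      have [m1 m2] := midf_lt hlt.
      case: hi => [<-|hi].
        by rewrite (le_lt_trans hc1 m1) (lt_le_trans m2 he1).
      by rewrite (le_lt_trans (Hc i hi) m1) (lt_le_trans m2 (He i hi)).
    have cee : c = e by apply/eqP; rewrite eq_le hce hlt.
    case: ci => i hi; case: ej => j hj.
    exists c => k'.
    have [y hy] := hfip (i :: j :: k' :: nil).
    have /andP[y1 _] := hy i (or_introl erefl).
    have /andP[_ y2] := hy j (or_intror (or_introl erefl)).
    have yc : y = c by apply/eqP; rewrite eq_le; apply/andP; split; [rewrite cee -hj | rewrite -hi].
    by rewrite -yc; apply: hy; right; right; left.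
  +
    move=> S hS.
    pose f := fun i : {x : K | S x} => (`|proj1_sig i| + 1)^-1.
    have fpos : forall i, 0 < f i by move=> i; rewrite /f invr_gt0 ltr_wpDl.
    have hfip : forall s : list {x : K | S x}, exists x : K,
        forall i, List.In i s -> (fun _ => 0 : K) i < x < f i.
      move=> s; have [x [h1 h2]] := @fin_lower K _ f fpos s.
      by exists x => i hi; rewrite /= h1 h2.
    have [x hx] := hs {x : K | S x} (fun _ => 0) f hS hfip.
    exists (- x^-1), x^-1 => y Sy.
    have /andP[x0 xy] := hx (exist _ y Sy).
    rewrite -ler_norml; apply: ltW.
    have : (`|y| + 1)^-1^-1 < x^-1.
      by apply: inv_lt => //; rewrite invr_gt0 ltr_wpDl.
    rewrite invrK => h; apply: lt_trans h; by rewrite ltrDl.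
- move=> [hc hinf] I a b hI hfip.
  have hcl : forall s : list I, exists x : K, forall i, List.In i s -> a i <= x <= b i.
    move=> s; have [x hx] := hfip s; exists x => i hi.
    by have /andP[h1 h2] := hx i hi; rewrite !ltW.
  have [x hx] := hc I a b hI hcl.
  case: (classic (exists j, b j = x)) => [[j hj]|hnb].
  + have ha : forall i, a i < x.
      move=> i; have [z hz] := hfip (i :: j :: nil).
      have /andP[h1 _] := hz i (or_introl erefl).
      have /andP[_ h2] := hz j (or_intror (or_introl erefl)).
      by rewrite -hj (lt_trans h1 h2).
    have [l [u hu]] := hinf _ (@card_image I K (fun i => (x - a i)^-1) Kappa hI).
    have hp : forall i, 0 < (x - a i)^-1 by move=> i; rewrite invr_gt0 subr_gt0.
    have hu' : forall i, (x - a i)^-1 <= u.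
      by move=> i; have /andP[_ h] := hu _ (ex_intro _ i erefl).
    exists (x - (u + 1)^-1) => i.
    have hu1 : 0 < u + 1 by apply: (lt_le_trans (hp i)); apply: le_trans (hu' i) _; rewrite lerDl.
    have /andP[_ hxb] := hx i.
    apply/andP; split; last first.
      by apply: lt_le_trans hxb; rewrite ltrBlDr ltrDl invr_gt0.
    rewrite ltrBrDl -ltrBrDr.
    have : (u + 1)^-1 < (x - a i)^-1^-1.
      apply: inv_lt => //; apply: le_lt_trans (hu' i) _; by rewrite ltrDl.
    by rewrite invrK.
  + have hb : forall i, x < b i.
      move=> i; have /andP[_ h] := hx i; rewrite lt_neqAle h andbT.
      by apply/eqP => e; apply: hnb; exists i.
    have [l [u hu]] := hinf _ (@card_image I K (fun i => (b i - x)^-1) Kappa hI).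
    have hp : forall i, 0 < (b i - x)^-1 by move=> i; rewrite invr_gt0 subr_gt0.
    have hu' : forall i, (b i - x)^-1 <= u.
      by move=> i; have /andP[_ h] := hu _ (ex_intro _ i erefl).
    exists (x + (u + 1)^-1) => i.
    have hu1 : 0 < u + 1 by apply: (lt_le_trans (hp i)); apply: le_trans (hu' i) _; rewrite lerDl.
    have /andP[hax _] := hx i.
    apply/andP; split.
      by apply: le_lt_trans hax _; rewrite ltrDl invr_gt0.
    rewrite -ltrBrDl.
    have : (u + 1)^-1 < (b i - x)^-1^-1.
      apply: inv_lt => //; apply: le_lt_trans (hu' i) _; by rewrite ltrDl.
    by rewrite invrK.
Qed.
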